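(* For every prime $p$, the polynomial ring $\mathbb{Z}_p[x]$ in one variable over the prime field $\mathbb{Z}_p$ is finitely separable.
   Context: A ring $R$ is finitely separable if for every $r\in R$ and every subring $A\subseteq R$ (not necessarily containing $1$) with $r\notin A$ there exist a finite ring $F$ and a ring homomorphism $\varphi:R\to F$ with $\varphi(r)\notin\varphi(A)$. *)

(* Defs.v *)
From HB Require Import structures.
From mathcomp Require Import all_boot all_order all_algebra.
Set Implicit Arguments. Unset Strict Implicit. Unset Printing Implicit Defensive.
Import GRing.Theory.
Local Open Scope ring_scope.

Definition nonunital_subring (R : pzRingType) (A : pred R) : Prop :=
  [/\ 0 \in A,
      {in A &, forall x y, x - y \in A} &
      {in A &, forall x y, x * y \in A}].

Definition finitely_separable (R : pzRingType) : Prop :=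
  forall (r : R) (A : pred R), nonunital_subring A -> r \notin A ->
    exists (F : finPzRingType) (phi : {rmorphism R -> F}),
      ~ (exists2 a, a \in A & phi a = phi r).

(* Main.v *)
Require Import Defs.
From HB Require Import structures.
From mathcomp Require Import all_boot all_order all_algebra.
From mathcomp Require Import boolp classical_sets.
From mathcomp Require Import zify ring.
Import GRing.Theory.

Local Open Scope ring_scope.

Definition qF (p : nat) (H : {poly 'F_p}) := {poly %/ H}.
HB.instance Definition _ p H := GRing.ComNzRing.on (@qF p H).
HB.instance Definition _ p H := Finite.on (@qF p H).

Section Sep.
Variable p : nat.
Local Notation B := {poly 'F_p}.

Lemma sep_by (A : pred B) (r H : B) : H \is monic -> (1 < size H)%N ->
  (forall al f, al \in A -> r <> al + H * f) ->
  exists (F : finPzRingType) (phi : {rmorphism B -> F}),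
    ~ (exists2 a, a \in A & phi a = phi r).
Proof.
move=> Hm Hs Hsep; exists (@qF p H), (in_qpoly H) => -[al alA eq].
have mk : mk_monic H = H by rewrite /mk_monic Hs Hm.
have e : Pdiv.CommonRing.rmodp (r - al) H = 0.
  rewrite Pdiv.RingMonic.rmodpB //.
  have := congr1 (fun x : @qF p H => x : B) eq; rewrite /in_qpoly /= mk => ->.
  by rewrite subrr.
apply: (Hsep al (Pdiv.CommonRing.rdivp (r - al) H) alA).
have := Pdiv.RingMonic.rdivp_eq Hm (r - al); rewrite e addr0 => E.
by rewrite mulrC -E addrC subrK.
Qed.

Lemma const_case (A : pred B) (r : B) : r \notin A ->
  (forall al, al \in A -> (size al <= 1)%N) ->
  exists (F : finPzRingType) (phi : {rmorphism B -> F}),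
    ~ (exists2 a, a \in A & phi a = phi r).
Proof.
move=> rA Asz; apply: (@sep_by A r 'X^((size r).+1)).
- exact: monicXn.
- by rewrite size_polyXn.
move=> al f alA E.
have [f0|fn0] := eqVneq f 0.
  by move: E; rewrite f0 mulr0 addr0 => E; rewrite E alA in rA.
have : size (r - al) = size ('X^((size r).+1) * f) by rewrite {1}E addrC addKr.
rewrite mulrC size_mulXn //.
have := size_polyD r (- al); rewrite size_polyN.
have := Asz _ alA; have := size_poly_gt0 f; rewrite fn0.
move=> h1 h2; rewrite leq_max => /orP[] h3 h4; rewrite h4 in h3; move: h3 h1 h2; clear; set x := size f; set y := size r; set z := size al; lia.
Qed.

End Sep.

Section General.
Variables (p : nat) (A : pred {poly 'F_p}) (r a : {poly 'F_p}).
Local Notation B := {poly 'F_p}.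
Hypotheses (hA : nonunital_subring A) (rA : r \notin A) (aA : a \in A)
  (sa : (1 < size a)%N).

Definition Pa (c : B) := exists q : B, c = q \Po a.

Lemma Pa_mul c d : Pa c -> Pa d -> Pa (c * d).
Proof. by move=> [q ->] [q' ->]; exists (q * q'); rewrite comp_polyM. Qed.
Lemma Pa_sub c d : Pa c -> Pa d -> Pa (c - d).
Proof. by move=> [q ->] [q' ->]; exists (q - q'); rewrite comp_polyB. Qed.
Lemma Pa_C k : Pa k%:P.
Proof. by exists k%:P; rewrite comp_polyC. Qed.
Lemma Pa0 : Pa 0.
Proof. by exists 0; rewrite comp_poly0. Qed.
Lemma Pa1 : Pa 1.
Proof. by exists 1; rewrite comp_polyC. Qed.
Lemma Pa_a : Pa a.
Proof. by exists 'X; rewrite comp_polyX. Qed.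

Lemma a0 : a != 0.
Proof. by rewrite -size_poly_gt0 ltnW. Qed.

Lemma A0 : 0 \in A. Proof. by case: hA. Qed.
Lemma AB x y : x \in A -> y \in A -> x - y \in A.
Proof. by case: hA => _ h _; apply: h. Qed.
Lemma AM x y : x \in A -> y \in A -> x * y \in A.
Proof. by case: hA => _ _ h; apply: h. Qed.
Lemma AD x y : x \in A -> y \in A -> x + y \in A.
Proof.
move=> xA yA; rewrite -[y]opprK; apply: AB => //.
by rewrite -sub0r; apply: AB => //; exact: A0.
Qed.
Lemma AMn x n : x \in A -> x *+ n \in A.
Proof.
move=> xA; elim: n => [|n IH]; first by rewrite mulr0n A0.
by rewrite mulrS AD.
Qed.
Lemma AC (k : 'F_p) x : x \in A -> k%:P * x \in A.
Proof.
move=> xA; have -> : k = (k : nat)%:R by rewrite natr_Zp.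
by rewrite mul_polyC scaler_nat AMn.
Qed.

Lemma APa c x : Pa c -> x \in A -> c * x \in A.
Proof.
move=> [q ->]; elim/poly_ind: q x => [|q k IH] x xA.
  by rewrite comp_poly0 mul0r A0.
rewrite comp_polyD comp_polyM comp_polyX comp_polyC mulrDl -mulrA.
by apply: AD; [apply: IH; apply: AM | apply: AC].
Qed.

Definition closedN (S : B -> Prop) :=
  [/\ S 0, (forall x y, S x -> S y -> S (x - y)) &
      (forall c x, Pa c -> S x -> S (c * x))].
Definition good (S : B -> Prop) :=
  [/\ closedN S, (forall x, x \in A -> S x) & ~ S r].

Lemma closedD S x y : closedN S -> S x -> S y -> S (x + y).
Proof.
move=> [S0 SB _] Sx Sy; rewrite -[y]opprK; apply: (SB) => //.
by rewrite -sub0r; apply: SB.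
Qed.

Lemma goodA : good (fun x => x \in A).
Proof.
split; [split; [exact: A0 | exact: AB | move=> c x Pc xA; exact: APa] | by [] | exact/negP].
Qed.

Lemma exists_max : exists N, good N /\
  forall S, good S -> (forall x, N x -> S x) -> forall x, S x -> N x.
Proof.
have [|N [PN Nmax]] := @Zorn_bigcup B (fun S => S = set0 \/ good S).
- move=> F FP tot.
  case: (pselect (exists2 X, F X & good X)) => [[X0 FX0 gX0]|none]; last first.
    left; apply/seteqP; split => x // [X FX Xx].
    case: (FP X FX) => [X0|gX]; first by rewrite X0 in Xx.
    by apply: none; exists X.
  have gm : forall X x, F X -> X x -> good X.
    by move=> X x FX Xx; case: (FP X FX) => // XE; rewrite XE in Xx.
  right; split; first split.
  + by exists X0 => //; case: gX0 => -[].
  + move=> x y [X FX Xx] [Y FY Yy].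
    case: (tot X Y FX FY) => sub.
      exists Y => //; case: (gm Y y FY Yy) => -[_ h _] _ _; apply: h => //.
      exact: sub.
    exists X => //; case: (gm X x FX Xx) => -[_ h _] _ _; apply: h => //.
    exact: sub.
  + move=> c x Pc [X FX Xx]; exists X => //.
    by case: (gm X x FX Xx) => -[_ _ h] _ _; apply: h.
  + by move=> x xA; exists X0 => //; case: gX0 => _ h _; apply: h.
  + move=> [X FX Xr]; by case: (gm X r FX Xr) => _ _.
have gN : good N.
  case: PN => // N0; exfalso; apply: (Nmax (fun x => x \in A)); last by right; exact: goodA.
  rewrite N0; split; first by [].
  by move=> h; have := h 0 A0.
exists N; split => // S gS NS.
case: (pselect (S `<=` N)%classic) => // nSN; exfalso.
by apply: (Nmax S); [split | right].
Qed.

Definition maxi (N : B -> Prop) :=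
  forall S, good S -> (forall x, N x -> S x) -> forall x, S x -> N x.

Lemma key N : good N -> maxi N -> forall y, ~ N y ->
  exists n c, [/\ N n, Pa c & r = n + c * y].
Proof.
move=> gN mx y Ny; apply: contrapT => H.
case: gN => -[N0 NB NM] NA Nr.
pose S := fun z => exists n c, [/\ N n, Pa c & z = n + c * y].
have gS : good S.
  split; first split.
  - by exists 0, 0; split => //; [exact: Pa0 | rewrite mul0r addr0].
  - move=> x z [n [c [Nn Pc ->]]] [n' [c' [Nn' Pc' ->]]].
    exists (n - n'), (c - c'); split; [exact: NB | exact: Pa_sub | ring].
  - move=> e x Pe [n [c [Nn Pc ->]]].
    exists (e * n), (e * c); split; [exact: NM | exact: Pa_mul | ring].
  - by move=> x xA; exists x, 0; split; [exact: NA | exact: Pa0 | rewrite mul0r addr0].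
  - exact: H.
apply: Ny; apply: (mx S gS).
- by move=> x Nx; exists x, 0; split; [| exact: Pa0 | rewrite mul0r addr0].
- by exists 0, 1; split; [| exact: Pa1 | rewrite mul1r add0r].
Qed.

Lemma get_u N : good N -> maxi N -> exists u, [/\ Pa u, u != 0 & N (u * r)].
Proof.
move=> gN mx; case: (pselect (N (a * r))) => Nar.
  by exists a; split; [exact: Pa_a | exact: a0 |].
have [n [c [Nn Pc E]]] := key _ gN mx _ Nar.
exists (1 - c * a); split.
- by apply: Pa_sub; [exact: Pa1 | apply: Pa_mul => //; exact: Pa_a].
- apply/eqP => h; have ca : c * a = 1 by apply/eqP; rewrite eq_sym -subr_eq0 h.
  have c0 : c != 0 by apply/eqP => c0; move: ca; rewrite c0 mul0r => /eqP; rewrite eq_sym oner_eq0.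
  have : size (c * a) = size (1 : B) by rewrite ca.
  rewrite size_mul // ?a0 // size_poly1.
  have := size_poly_gt0 c; rewrite c0.
  move: sa; set x := size a; set y := size c; lia.
- suff -> : (1 - c * a) * r = r - c * (a * r) by rewrite {1}E addrK.
  by ring.
Qed.

Lemma tors N : good N -> maxi N -> forall y, exists g, [/\ Pa g, g != 0 & N (g * y)].
Proof.
move=> gN mx y; have [u [Pu u0 Nu]] := get_u _ gN mx.
case: (pselect (N y)) => Ny.
  by exists 1; split; [exact: Pa1 | exact: oner_neq0 | rewrite mul1r].
have [n [c [Nn Pc E]]] := key _ gN mx _ Ny.
have c0 : c != 0.
  apply/eqP => c0; case: gN => _ _; apply; rewrite E c0 mul0r addr0 //.
case: gN => -[N0 NB NM] _ _.
exists (u * c); split; [exact: Pa_mul | exact: mulf_neq0 |].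
have -> : u * c * y = u * r - u * n by rewrite E; ring.
by apply: NB => //; apply: NM.
Qed.

Lemma prod_h N : good N -> maxi N -> forall m,
  exists h, [/\ Pa h, h != 0 & forall i, (i < m)%N -> N (h * 'X^i)].
Proof.
move=> gN mx; elim => [|m [h [Ph h0 Hh]]].
  by exists 1; split; [exact: Pa1 | exact: oner_neq0 |].
have [g [Pg g0 Ng]] := tors _ gN mx ('X^m).
case: gN => -[N0 NB NM] _ _.
exists (h * g); split; [exact: Pa_mul | exact: mulf_neq0 |].
move=> i; rewrite ltnS leq_eqVlt => /orP[/eqP->|lt].
  by rewrite -mulrA; apply: NM.
by rewrite -mulrA mulrCA; apply: NM => //; apply: Hh.
Qed.

Lemma all_h N h : closedN N -> Pa h ->
  (forall i, (i < size a)%N -> N (h * 'X^i)) -> forall f, N (h * f).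
Proof.
move=> cN Ph Hh f; have [n] := ubnP (size f); elim: n f => // n IH f sf.
case: (cN) => N0 NB NM.
have [->|f0] := eqVneq f 0; first by rewrite mulr0.
rewrite (divp_eq f a) mulrDr; apply: closedD => //.
  have -> : h * (f %/ a * a) = a * (h * (f %/ a)) by ring.
  apply: NM; first exact: Pa_a.
  apply: IH; rewrite size_divp ?a0 //.
  have := size_poly_gt0 f; rewrite f0; move: sa sf.
  set x := size a; set y := size f; lia.
have sg : (size (f %% a)%R < size a)%N by rewrite ltn_modp a0.
move: sg; set g := (f %% a)%R => sg.
rewrite -[g]coefK poly_def mulr_sumr.
apply: (big_ind (fun x => N x)) => //.
  by move=> x y Nx Ny; apply: closedD.
move=> i _; rewrite -mul_polyC mulrCA; apply: NM; first exact: Pa_C.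
by apply: Hh; apply: ltn_trans sg.
Qed.

Lemma general : exists (F : finPzRingType) (phi : {rmorphism B -> F}),
    ~ (exists2 a, a \in A & phi a = phi r).
Proof.
have [N [gN mx]] := exists_max.
have [h [Ph h0 Hh]] := prod_h _ gN mx (size a).
have Nall := all_h _ _ (let: And3 c _ _ := gN in c) Ph Hh.
set h' := a * h.
have h'0 : h' != 0 by rewrite mulf_neq0 ?a0.
have sh' : (1 < size h')%N.
  rewrite /h' size_mul ?a0 //; have := size_poly_gt0 h; rewrite h0.
  move: sa; set x := size a; set y := size h; lia.
have lc0 : (lead_coef h')^-1 != 0 by rewrite invr_eq0 lead_coef_eq0.
apply: (@sep_by p A r ((lead_coef h')^-1 *: h')).
- by rewrite monicE lead_coefZ mulVf ?lead_coef_eq0.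
- by rewrite size_scale.
move=> al f alA E.
case: gN => -[N0 NB NM] NA Nr; apply: Nr.
rewrite E; apply: closedD; [by split | exact: NA |].
have -> : (lead_coef h')^-1 *: h' * f = ((lead_coef h')^-1%:P * a) * (h * f).
  by rewrite -mul_polyC /h'; ring.
apply: NM; last exact: Nall.
by apply: Pa_mul; [exact: Pa_C | exact: Pa_a].
Qed.

End General.

Theorem proposition6 (p : nat) (hp : prime p) :
  finitely_separable {poly 'F_p}.
Proof.
move=> r A hA rA.
case: (pselect (exists2 a, a \in A & (1 < size a)%N)) => [[a aA sa]|none].
  exact: (@general p A r a hA rA aA sa).
apply: const_case => // al alA; rewrite leqNgt; apply/negP => h.
by apply: none; exists al.
Qed.
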